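(* Let $n\ge 2$, $N=\{1,\dots,n\}$, for each $i\in N$ let $A_i$ be a nonempty finite set, $A=\prod_{i\in N}A_i$, $u_i:A\to\mathbb{R}$, $u(a)=(u_i(a))_{i\in N}$, $V=\operatorname{co}\{u(a):a\in A\}$ and $F^*=\prod_{i\in N}\left[\min_{a\in A}u_i(a),\ \max_{a\in A}u_i(a)\right]$. Then $V\neq F^*$ if and only if there exist two points $u,\tilde u\in V$ with $u\neq\tilde u$ satisfying: (1) there exists $\lambda\in\mathbb{R}^n\setminus\{\mathbf 0\}$ such that for all $\bar u\in\mathbb{R}^n$: $\bar u\in\arg\max_{u'\in V}\lambda\cdot u'$ if and only if $\bar u\in\{tu+(1-t)\tilde u: t\in[0,1]\}$; (2) there exist at least two players $i\in N$ such that $u_i\neq\tilde u_i$.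
   Context: $\operatorname{co}$ denotes convex hull. *)

(* Defs.v *)
From HB Require Import structures.
From mathcomp Require Import all_boot all_order all_algebra.
Set Implicit Arguments. Unset Strict Implicit. Unset Printing Implicit Defensive.
Import Order.TTheory GRing.Theory Num.Theory.
Local Open Scope ring_scope.

(* Points of R^n are row vectors 'rV[R]_n; coordinate i of x is x ord0 i. *)

Definition conv (R : realFieldType) (n : nat) (S : 'rV[R]_n -> Prop)
  : 'rV[R]_n -> Prop :=
  fun x => exists (k : nat) (w : 'I_k -> R) (p : 'I_k -> 'rV[R]_n),
    (forall j, 0 <= w j) /\ \sum_(j < k) w j = 1 /\
    (forall j, S (p j)) /\ x = \sum_(j < k) w j *: p j.

Definition payoffs (R : realFieldType) (n : nat) (T : finType)
  (u : T -> 'rV[R]_n) : 'rV[R]_n -> Prop :=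
  fun x => exists a, x = u a.

(* min_{a in T} f a and max_{a in T} f a (T nonempty; junk 0 if T empty). *)
Definition fmin (R : realFieldType) (T : finType) (f : T -> R) : R :=
  match [pick a : T] with
  | Some a0 => \big[Order.min/f a0]_(a : T) f a
  | None => 0
  end.
Definition fmax (R : realFieldType) (T : finType) (f : T -> R) : R :=
  match [pick a : T] with
  | Some a0 => \big[Order.max/f a0]_(a : T) f a
  | None => 0
  end.

Definition Fstar (R : realFieldType) (n : nat) (T : finType)
  (u : T -> 'rV[R]_n) : 'rV[R]_n -> Prop :=
  fun x => forall i : 'I_n,
    fmin (fun a => u a ord0 i) <= x ord0 i <= fmax (fun a => u a ord0 i).

Definition dotp (R : realFieldType) (n : nat) (x y : 'rV[R]_n) : R :=
  \sum_(i < n) x ord0 i * y ord0 i.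

Definition argmax_lin (R : realFieldType) (n : nat) (V : 'rV[R]_n -> Prop)
  (l : 'rV[R]_n) : 'rV[R]_n -> Prop :=
  fun x => V x /\ forall y, V y -> dotp l y <= dotp l x.

Definition segment (R : realFieldType) (n : nat) (u v : 'rV[R]_n)
  : 'rV[R]_n -> Prop :=
  fun x => exists t : R, 0 <= t <= 1 /\ x = t *: u + (1 - t) *: v.

(* Main.v *)
Require Import Defs.
From HB Require Import structures.
From mathcomp Require Import all_boot all_order all_algebra.
From mathcomp Require Import reals.
From mathcomp Require Import ring lra.
Import Order.TTheory GRing.Theory Num.Theory.
Local Open Scope ring_scope.
Set Implicit Arguments. Unset Strict Implicit.

Section Basics.
Variable R : realFieldType.
Variable n : nat.
Implicit Types (l x y : 'rV[R]_n).

Lemma dotpDl l1 l2 x : dotp (l1 + l2) x = dotp l1 x + dotp l2 x.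
Proof. by rewrite /dotp -big_split; apply: eq_bigr => i _; rewrite mxE mulrDl. Qed.

Lemma dotpZl c l x : dotp (c *: l) x = c * dotp l x.
Proof. by rewrite /dotp mulr_sumr; apply: eq_bigr => i _; rewrite mxE mulrA. Qed.

Lemma dotpDr l x y : dotp l (x + y) = dotp l x + dotp l y.
Proof. by rewrite /dotp -big_split; apply: eq_bigr => i _; rewrite mxE mulrDr. Qed.

Lemma dotpZr c l x : dotp l (c *: x) = c * dotp l x.
Proof. by rewrite /dotp mulr_sumr; apply: eq_bigr => i _; rewrite mxE mulrCA. Qed.

Lemma dotp_sum l k (w : 'I_k -> R) (p : 'I_k -> 'rV[R]_n) :
  dotp l (\sum_(j < k) w j *: p j) = \sum_(j < k) w j * dotp l (p j).
Proof.
rewrite /dotp; under eq_bigr => i _ do rewrite summxE mulr_sumr.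
rewrite exchange_big; apply: eq_bigr => j _; rewrite mulr_sumr.
by apply: eq_bigr => i _; rewrite mxE mulrCA.
Qed.

Lemma dotp_delta (j : 'I_n) x : dotp (delta_mx 0 j) x = x 0 j.
Proof.
rewrite /dotp (bigD1 j) //= big1 ?addr0; first by rewrite mxE !eqxx mul1r.
by move=> i /negbTE ij; rewrite mxE ij andbF mul0r.
Qed.

Lemma dotp_deltar (j : 'I_n) x : dotp x (delta_mx 0 j) = x 0 j.
Proof.
rewrite /dotp (bigD1 j) //= big1 ?addr0; first by rewrite mxE !eqxx mulr1.
by move=> i /negbTE ij; rewrite mxE ij andbF mulr0.
Qed.

Lemma dotp0l x : dotp 0 x = 0.
Proof. by rewrite /dotp big1 // => i _; rewrite mxE mul0r. Qed.

End Basics.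


Section Conv.
Variable R : realFieldType.
Variable n : nat.
Variable T : finType.
Variable u : T -> 'rV[R]_n.

Lemma conv_le l m y : (forall a, dotp l (u a) <= m) ->
  conv (payoffs u) y -> dotp l y <= m.
Proof.
move=> hm [k [w [p [w0 [w1 [pP ->]]]]]].
rewrite dotp_sum -[m]mul1r -w1 mulr_suml; apply: ler_sum => j _.
apply: ler_wpM2l => //; have [a ->] := pP j; exact: hm.
Qed.

Lemma conv_seg a b t : 0 <= t <= 1 ->
  conv (payoffs u) (t *: u a + (1 - t) *: u b).
Proof.
move=> /andP[t0 t1].
exists 2%N, (fun j => if j == ord0 then t else 1 - t),
  (fun j => if j == ord0 then u a else u b).
split; first by move=> j; case: ifP => _ //; rewrite subr_ge0.
split; first by rewrite !big_ord_recl big_ord0 /= addr0 addrC subrK.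
split; first by move=> j; case: ifP => _; [exists a|exists b].
by rewrite !big_ord_recl big_ord0 /= addr0.
Qed.

Lemma conv_pt a : conv (payoffs u) (u a).
Proof.
have := @conv_seg a a 1; rewrite ler01 lexx subrr scale0r addr0 scale1r.
by apply.
Qed.

End Conv.

Section FMinMax.
Variable R : realFieldType.
Variable T : finType.
Variable a0 : T.
Variable f : T -> R.

Lemma fmax_ge a : f a <= fmax f.
Proof.
rewrite /fmax; case: pickP => [a1 _|/(_ a0)//].
exact: le_bigmax.
Qed.

Lemma fmin_le a : fmin f <= f a.
Proof.
rewrite /fmin; case: pickP => [a1 _|/(_ a0)//].
exact: bigmin_le.
Qed.

Lemma fmax_att : exists a, fmax f = f a.
Proof.
rewrite /fmax; case: pickP => [a1 _|/(_ a0)//].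
apply: (big_ind (fun y => exists a, y = f a)); first by exists a1.
  move=> x y [b ->] [c ->]; rewrite /Order.max; case: ifP => _.
    by exists c. by exists b.
by move=> i _; exists i.
Qed.

Lemma fmin_att : exists a, fmin f = f a.
Proof.
rewrite /fmin; case: pickP => [a1 _|/(_ a0)//].
apply: (big_ind (fun y => exists a, y = f a)); first by exists a1.
  move=> x y [b ->] [c ->]; rewrite /Order.min; case: ifP => _.
    by exists b. by exists c.
by move=> i _; exists i.
Qed.
End FMinMax.


Section Break.
Variable R : realFieldType.
Variable T : finType.

Lemma breakpoint (S : {set T}) (F G : T -> R) v w :
 v \in S -> (forall b, b \in S -> F b <= F v) -> w \in S -> G v < G w ->
 exists t p, [/\ 0 <= t, p \in S, G v < G p, F p + t * G p = F v + t * G v &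
   forall b, b \in S -> F b + t * G b <= F v + t * G v].
Proof.
move=> vS Fv wS Gw.
pose r x := (F v - F x) / (G x - G v).
have Pw : (w \in S) && (G v < G w) by rewrite wS Gw.
case: (@arg_minP _ _ _ w [pred x | (x \in S) && (G v < G x)] r Pw).
move=> p /andP[pS Gp] pmin.
have dp : 0 < G p - G v by rewrite subr_gt0.
exists (r p), p; split => //.
- by rewrite /r divr_ge0 // ?subr_ge0 ?Fv // ltW.
- rewrite /r; field; by rewrite lt0r_neq0.
move=> b bS; case: (ltP (G v) (G b)) => Gb.
  have := pmin b; rewrite /= bS Gb => /(_ isT).
  have db : 0 < G b - G v by rewrite subr_gt0.
  rewrite {2}/r ler_pdivlMr //; set t := r p => h.
  have ht : t * (G p - G v) = F v - F p by rewrite /t /r; field; rewrite lt0r_neq0.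
  move: h ht; rewrite !mulrBr; lra.
have t0 : 0 <= r p by rewrite /r divr_ge0 // ?subr_ge0 ?Fv // ltW.
have := Fv b bS; have := ler_wpM2l t0 Gb; lra.
Qed.

Lemma face_face (a0 : T) (F G : T -> R) : exists e, 0 < e /\ forall a,
  (forall b, F b + e * G b <= F a + e * G a) <->
  ((forall b, F b <= F a) /\ (forall b, (forall c, F c <= F b) -> G b <= G a)).
Proof.
case: (@arg_maxP _ _ _ a0 predT F isT) => a1 _ a1max.
set m := F a1.
have hm : forall b, F b <= m by move=> b; exact: a1max.
pose B := \sum_a `|G a|.
have hB a : `|G a| <= B.
  rewrite /B (bigD1 a) //= lerDl; exact: sumr_ge0.
have hG a b : G b - G a <= B + B.
  have := hB a; have := hB b; have := ler_norm (G b).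
  have: - G a <= `|G a| by rewrite -normrN ler_norm.
  lra.
have B0 : 0 <= B by apply: sumr_ge0.
have [d [d0 hd]] : exists d, 0 < d /\ forall a, F a < m -> d <= m - F a.
  case: (pickP [pred a | F a < m]) => [a2 h2|none].
    case: (@arg_minP _ _ _ a2 [pred a | F a < m] (fun a => m - F a) h2).
    move=> a3 h3 a3min; exists (m - F a3); split; first by rewrite subr_gt0.
    by move=> a ha; apply: a3min.
  by exists 1; split => // a ha; have := none a; rewrite /= ha.
pose e := d / (B + B + 1).
have BB : 0 < B + B + 1 by lra.
have e0 : 0 < e by rewrite /e divr_gt0.
have eB : e * (B + B) < d.
  rewrite /e mulrAC ltr_pdivrMr //; rewrite ltr_pM2l //; lra.
have key a b : e * (G b - G a) < d.
  apply: le_lt_trans eB; apply: ler_wpM2l; [exact: ltW|exact: hG].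
have eG a b : e * G b - e * G a = e * (G b - G a) by rewrite mulrBr.
exists e; split => // a; split.
  move=> H.
  have Fa : F a = m.
    apply/eqP; rewrite eq_le hm /= leNgt; apply/negP => lt.
    have := hd a lt; have := H a1; have := key a1 a; have := eG a1 a. 
    rewrite -/m; lra.
  split; first by move=> b; rewrite Fa hm.
  move=> b hb; have Fb : F b = m.
    by apply/eqP; rewrite eq_le hm /= hb.
  by have := H b; rewrite Fa Fb lerD2l ler_pM2l.
move=> [Ha Hg] b.
have Fa : F a = m by apply/eqP; rewrite eq_le hm Ha.
case: (ltP (F b) m) => Fb.
  have := hd b Fb; have := key a b; have := eG a b; lra.
have Fb' : F b = m by apply/eqP; rewrite eq_le hm.
have : G b <= G a by apply: Hg => c; rewrite Fb' hm.
move=> /(ler_wpM2l (ltW e0)); rewrite Fa Fb'; lra.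
Qed.
End Break.


Section Faces.
Variable R : realFieldType.
Variable n : nat.
Variable T : finType.
Variable u : T -> 'rV[R]_n.
Variable a0 : T.

Definition fs l : {set T} := [set a | [forall b, dotp l (u b) <= dotp l (u a)]].

Lemma fsP l a : reflect (forall b, dotp l (u b) <= dotp l (u a)) (a \in fs l).
Proof. by rewrite inE; apply: forallP. Qed.

Lemma face_sub l mu : exists l', fs l' =
  [set a in fs l | [forall b in fs l, dotp mu (u b) <= dotp mu (u a)]].
Proof.
have [e [e0 He]] := face_face a0 (fun a => dotp l (u a)) (fun a => dotp mu (u a)).
exists (l + e *: mu); apply/setP => a; rewrite !inE.
have E b : dotp (l + e *: mu) (u b) = dotp l (u b) + e * dotp mu (u b).
  by rewrite dotpDl dotpZl.
apply/forallP/andP.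
  move=> H; have [] := (He a).1.
    by move=> b; rewrite -!E; exact: H.
  move=> h1 h2; split; first by apply/forallP.
  apply/forallP => b; apply/implyP => /fsP hb; exact: h2.
move=> [/forallP h1 /forallP h2] b; rewrite !E; apply: (He a).2; split => //.
by move=> c hc; have := h2 c; rewrite (introT (fsP _ _) hc).
Qed.

Lemma argmax_seg l p q : p \in fs l -> q \in fs l ->
  (forall a, a \in fs l -> segment (u p) (u q) (u a)) ->
  forall x, argmax_lin (conv (payoffs u)) l x <-> segment (u p) (u q) x.
Proof.
move=> /fsP hp /fsP hq hseg x.
set m := dotp l (u p).
have hm b : dotp l (u b) <= m by apply: hp.
have qm : dotp l (u q) = m by apply/eqP; rewrite eq_le hm hq.
split.
  move=> [Vx Hmax]; have xm : m <= dotp l x by apply: Hmax; exact: conv_pt.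
  move: Vx Hmax xm => [k [w [pts [w0 [w1 [pP xE]]]]]] Hmax xm.
  have S0 : \sum_(j < k) w j * (m - dotp l (pts j)) = 0.
    apply/eqP; rewrite eq_le; apply/andP; split; last first.
      apply: sumr_ge0 => j _; apply: mulr_ge0 => //; rewrite subr_ge0.
      by have [a ->] := pP j.
    under eq_bigr do rewrite mulrBr.
    by rewrite sumrB -mulr_suml w1 mul1r -dotp_sum -xE subr_le0.
  have hj j : exists th, 0 <= th <= 1 /\
     w j *: pts j = w j *: (th *: u p + (1 - th) *: u q).
    have nn : forall i, predT i -> 0 <= w i * (m - dotp l (pts i)).
      by move=> i _; apply: mulr_ge0 => //; rewrite subr_ge0; have [a ->] := pP i.
    have /eqP := psumr_eq0P nn S0 (isT : predT j).
    rewrite mulf_eq0 => /orP[/eqP ->|].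
      by exists 0; rewrite lexx ler01 !scale0r.
    rewrite subr_eq0 => /eqP e.
    have [a pa] := pP j.
    have : a \in fs l by apply/fsP => b; rewrite -pa -e hm.
    move=> /hseg [th [th01 ea]]; exists th; by rewrite pa ea.
  have [th hth] := fin_all_exists hj.
  exists (\sum_j w j * th j); split.
    apply/andP; split.
      apply: sumr_ge0 => j _; apply: mulr_ge0 => //; by case: (hth j) => /andP[].
    rewrite -w1; apply: ler_sum => j _; apply: ler_piMr => //.
    by case: (hth j) => /andP[].
  rewrite xE.
  have -> : \sum_(j < k) w j *: pts j = \sum_(j < k) ((w j * th j) *: u p +
      (w j * (1 - th j)) *: u q).
    by apply: eq_bigr => j _; rewrite (hth j).2 scalerDr !scalerA.
  rewrite big_split /= -!scaler_suml; congr (_ + _ *: _).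
  have -> : (1:R) - \sum_(j < k) w j * th j = \sum_(j < k) (w j - w j * th j).
    by rewrite sumrB w1.
  apply: eq_bigr => j _; ring.
move=> [t [t01 ->]]; split; first exact: conv_seg.
move=> y Vy; rewrite dotpDr !dotpZr qm -/m.
have -> : t * m + (1 - t) * m = m by ring.
exact: conv_le Vy.
Qed.

End Faces.


Section Step2.
Variable R : realFieldType.
Variable n : nat.
Variable T : finType.
Variable u : T -> 'rV[R]_n.
Variable a0 : T.
Variable k : 'I_n.

Definition twodiff (S : {set T}) :=
  exists a b, [/\ a \in S, b \in S & u a 0 k != u b 0 k].

Lemma step_j (S : {set T}) l (j : 'I_n) : S = fs u l -> twodiff S ->
  (exists H : {set T}, [/\ (exists l', H = fs u l'), H \proper S & twodiff H]) \/
  (exists c, forall a b, a \in S -> b \in S ->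
      u a 0 j + c * u a 0 k = u b 0 j + c * u b 0 k).
Proof.
move=> Sl [a [b [aS bS ab]]].
pose F x := u x 0 j.
case: (@arg_maxP _ _ _ a (mem S) F aS) => v vS' vmax.
have vS : v \in S by exact: vS'.
have Fv : forall y, y \in S -> F y <= F v by move=> y yS; exact: vmax.
have [w [wS vw]] : exists w, w \in S /\ u v 0 k != u w 0 k.
  case: (eqVneq (u v 0 k) (u a 0 k)) => e; last by exists a.
  by exists b; split => //; rewrite e.
pose s : R := if u v 0 k < u w 0 k then 1 else -1.
pose G x := s * u x 0 k.
have Gvw : G v < G w.
  rewrite /G /s; case: ifP => h; first by rewrite !mul1r.
  rewrite !mulN1r ltrN2; move: h; rewrite ltNge => /negbFE.
  by rewrite le_eqVlt eq_sym (negbTE vw).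
have [t [p [t0 pS Gp Fp Fmax]]] := breakpoint vS Fv wS Gvw.
pose mu := delta_mx 0 j + (t * s) *: delta_mx (0 : 'I_1) k.
have muE x : dotp mu (u x) = F x + t * G x.
  by rewrite dotpDl dotpZl !dotp_delta /G mulrA.
pose H := [set x in S | [forall y in S, dotp mu (u y) <= dotp mu (u x)]].
have vH : v \in H.
  rewrite inE vS /=; apply/forallP => y; apply/implyP => yS; rewrite !muE.
  exact: Fmax.
have pH : p \in H.
  rewrite inE pS /=; apply/forallP => y; apply/implyP => yS; rewrite !muE Fp.
  exact: Fmax.
case: (eqVneq H S) => HS.
  right; exists (t * s) => x y xS yS.
  have hx : x \in H by rewrite HS.
  have hy : y \in H by rewrite HS.
  move: hx hy; rewrite !inE xS yS /= => /forallP hx /forallP hy.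
  have := implyP (hx y) yS; have := implyP (hy x) xS.
  rewrite !muE /F /G => h1 h2.
  have e : u x 0 j + t * (s * u x 0 k) = u y 0 j + t * (s * u y 0 k).
    by apply/eqP; rewrite eq_le h1 h2.
  by rewrite !mulrA in e.
left; exists H; split.
- have [l' hl'] := face_sub u a0 l mu; exists l'; rewrite hl' -Sl.
  by apply/setP => x; rewrite !inE.
- rewrite properEneq HS /=; apply/subsetP => x; rewrite inE => /andP[].
  done.
exists v, p; split => //.
by apply/eqP => e; move: Gp; rewrite /G e ltxx.
Qed.


Lemma step2 N (S : {set T}) : (#|S| <= N)%N -> (exists l, S = fs u l) ->
  twodiff S ->
  exists S' p q, [/\ (exists l, S' = fs u l), S' \subset S, p \in S' /\ q \in S',
     u p 0 k != u q 0 k & forall a, a \in S' -> segment (u p) (u q) (u a)].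
Proof.
elim: N S => [|N IH] S hS [l Sl] td.
  case: td => a [b [aS _ _]].
  by move: hS; rewrite leqn0 => /eqP/card0_eq/(_ a); rewrite aS.
case: (boolp.pselect (exists j, j != k /\ exists H : {set T},
   [/\ (exists l', H = fs u l'), H \proper S & twodiff H])).
  move=> [j [_ [H [fH pH tH]]]].
  have hH : (#|H| <= N)%N.
    by have := proper_card pH => /leq_trans /(_ hS); rewrite ltnS.
  have [S' [p [q [f' s' pq' pq sg]]]] := IH H hH fH tH.
  exists S', p, q; split => //; apply: subset_trans s' _.
  exact: proper_sub pH.
move=> nokey.
have col j : j != k -> exists c, forall a b, a \in S -> b \in S ->
      u a 0 j + c * u a 0 k = u b 0 j + c * u b 0 k.
  move=> jk; case: (step_j j Sl td) => // h.
  by case: nokey; exists j.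
case: td => a [b [aS bS ab]].
pose F x := u x 0 k.
case: (@arg_maxP _ _ _ a (mem S) F aS) => p pS' pmax.
case: (@arg_minP _ _ _ a (mem S) F aS) => q qS' qmin.
have pS : p \in S by exact: pS'.
have qS : q \in S by exact: qS'.
have hp x : x \in S -> F x <= F p by move=> xS; exact: pmax.
have hq x : x \in S -> F q <= F x by move=> xS; exact: qmin.
have D0 : F q < F p.
  rewrite lt_neqAle hq // andbT; apply/eqP => e.
  move: ab; have := hp a aS; have := hp b bS; have := hq a aS; have := hq b bS.
  rewrite e /F => h1 h2 h3 h4; suff -> : u a 0 k = u b 0 k by rewrite eqxx.
  apply/eqP; rewrite eq_le; apply/andP; split; [exact: le_trans h4 h1|exact: le_trans h3 h2].
exists S, p, q; split => //.
- by exists l.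
- by apply: contraTneq D0 => e; rewrite /F e ltxx.
move=> x xS.
have Dn : F p - F q != 0 by rewrite subr_eq0 gt_eqF.
exists ((F x - F q) / (F p - F q)); split.
  apply/andP; split.
    by apply: divr_ge0; rewrite subr_ge0 ?hq // ltW.
  rewrite ler_pdivrMr ?subr_gt0 // mul1r lerD2r; exact: hp.
apply/rowP => i; rewrite !mxE.
case: (eqVneq i k) => [->|ik].
  rewrite /F; field; exact: Dn.
have [c hc] := col i ik.
have e1 : u x 0 i = u q 0 i + c * (u q 0 k - u x 0 k).
  have := hc x q xS qS; rewrite mulrBr; lra.
have e2 : u p 0 i = u q 0 i + c * (u q 0 k - u p 0 k).
  have := hc p q pS qS; rewrite mulrBr; lra.
rewrite e1 e2; move: Dn; rewrite /F => Dn; field; exact: Dn.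
Qed.

End Step2.


Section Box.
Variable R : realFieldType.
Variable n : nat.
Variable T : finType.
Variable u : T -> 'rV[R]_n.
Variable a0 : T.

Notation mi i := (fmin (fun a => u a 0 i)).
Notation Mi i := (fmax (fun a => u a 0 i)).

Lemma V_sub_F x : conv (payoffs u) x -> Fstar u x.
Proof.
move=> Vx i; apply/andP; split.
  have h : dotp (- delta_mx (0:'I_1) i) x <= - mi i.
    apply: conv_le Vx => a; rewrite -scaleN1r dotpZl mulN1r dotp_delta lerN2.
    exact: (fmin_le a0).
  by move: h; rewrite -scaleN1r dotpZl mulN1r dotp_delta lerN2.
rewrite -(dotp_delta i x); apply: conv_le Vx => a; rewrite dotp_delta.
exact: (fmax_ge a0).
Qed.

Definition corner (s : {ffun 'I_n -> bool}) : 'rV[R]_n :=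
  \row_i (if s i then Mi i else mi i).

Lemma corner_in (H : forall (l : 'rV[R]_n) (j : 'I_n) (a b : T), l 0 j != 0 -> a \in fs u l ->
     b \in fs u l -> u a 0 j = u b 0 j) s : exists a, u a = corner s.
Proof.
pose l : 'rV[R]_n := \row_i (if s i then 1 else -1).
pose F a := dotp l (u a).
case: (@arg_maxP _ _ _ a0 predT F isT) => v _ vmax.
exists v; apply/rowP => k; rewrite mxE.
case: (eqVneq (u v 0 k) (if s k then Mi k else mi k)) => // ne.
have [w hw] : exists w, u w 0 k = if s k then Mi k else mi k.
  case: (s k).
    by have [w hw] := fmax_att a0 (fun a => u a 0 k); exists w.
  by have [w hw] := fmin_att a0 (fun a => u a 0 k); exists w.
pose G a := l 0 k * u a 0 k.
have lk : l 0 k = if s k then 1 else -1 by rewrite mxE.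
have Gvw : G v < G w.
  rewrite /G lk hw; move: ne; case: (s k) => ne.
    rewrite !mul1r lt_neqAle ne; exact: (fmax_ge a0).
  rewrite !mulN1r ltrN2 lt_neqAle eq_sym ne; exact: (fmin_le a0).
have vS : v \in [set: T] by rewrite inE.
have wS : w \in [set: T] by rewrite inE.
have Fv : forall b, b \in [set: T] -> F b <= F v by move=> b _; exact: vmax.
have [t [p [t0 _ Gp Fp Fmax]]] := breakpoint vS Fv wS Gvw.
pose l' := l + (t * l 0 k) *: delta_mx (0 : 'I_1) k.
have lE x : dotp l' (u x) = F x + t * G x.
  by rewrite dotpDl dotpZl dotp_delta /G mulrA.
have l'k : l' 0 k != 0.
  rewrite !mxE !eqxx mulr1; case: (s k); lra.
have vf : v \in fs u l' by apply/fsP => b; rewrite !lE; apply: Fmax; rewrite inE.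
have pf : p \in fs u l' by apply/fsP => b; rewrite !lE Fp; apply: Fmax; rewrite inE.
have := H _ _ _ _ l'k vf pf => e.
by move: Gp; rewrite /G e ltxx.
Qed.

End Box.

Section Box2.
Variable R : realFieldType.
Variable n : nat.
Variable T : finType.
Variable u : T -> 'rV[R]_n.
Variable a0 : T.

Notation mi i := (fmin (fun a => u a 0 i)).
Notation Mi i := (fmax (fun a => u a 0 i)).

Lemma box_in (H : forall s, exists a, u a = corner u s) x :
  Fstar u x -> conv (payoffs u) x.
Proof.
move=> Fx.
pose al i := if Mi i == mi i then 1 else (x 0 i - mi i) / (Mi i - mi i).
have hal i : 0 <= al i <= 1 /\ x 0 i = al i * Mi i + (1 - al i) * mi i.
  have /andP[h1 h2] := Fx i.
  rewrite /al; case: eqP => e.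
    split; first by rewrite ler01 lexx.
    rewrite mul1r subrr mul0r addr0; rewrite e in h2 *; apply/eqP.
    by rewrite eq_le h2 h1.
  have D : 0 < Mi i - mi i.
    rewrite subr_gt0 lt_neqAle; apply/andP; split; first by apply/eqP => e'; apply: e; rewrite e'.
    exact: le_trans h1 h2.
  split.
    apply/andP; split; first by apply: divr_ge0; [rewrite subr_ge0 | exact: ltW].
    by rewrite ler_pdivrMr // mul1r lerD2r.
  field; by rewrite lt0r_neq0.
pose W (s : {ffun 'I_n -> bool}) := \prod_i (if s i then al i else 1 - al i).
pose F' i0 i (b : bool) := (if b then al i else 1 - al i) *
   (if i == i0 then (if b then Mi i else mi i) else 1).
have W0 s : 0 <= W s.
  apply: prodr_ge0 => i _; have [/andP[h1 h2] _] := hal i.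
  by case: (s i) => //; rewrite subr_ge0.
have W1 : \sum_s W s = 1.
  rewrite /W -(bigA_distr_bigA (fun i (b : bool) => if b then al i else 1 - al i)).
  by rewrite big1 // => i _; rewrite big_bool /= addrC subrK.
have Wc i0 : \sum_s W s * corner u s 0 i0 = x 0 i0.
  transitivity (\sum_(s : {ffun 'I_n -> bool}) \prod_i F' i0 i (s i)).
    apply: eq_bigr => s _; rewrite /F' big_split /=; congr (_ * _).
    rewrite (bigD1 i0) //= eqxx big1 ?mulr1; first by rewrite mxE.
    by move=> i /negbTE ->.
  rewrite -(bigA_distr_bigA (F' i0)) (bigD1 i0) //= [X in _ * X]big1.
    rewrite big_bool /F' eqxx /= (hal i0).2 /=; ring.
  move=> i /negbTE ne; rewrite big_bool /F' ne /=; ring.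
exists #|{: {ffun 'I_n -> bool}}|, (fun j => W (enum_val j)),
  (fun j => corner u (enum_val j)).
split; first by move=> j.
split; first by rewrite -W1 -big_enum_val.
split; first by move=> j; have [a e] := H (enum_val j); exists a; rewrite e.
apply/rowP => i; rewrite summxE -Wc.
rewrite (big_enum_val (fun s => W s * corner u s 0 i)).
by symmetry; under eq_bigr do rewrite mxE.
Qed.
End Box2.


Unset Implicit Arguments.

Theorem lemma3 (R : realType) (n : nat) (hn : (2 <= n)%N)
  (A : 'I_n -> finType) (hA : forall i, (0 < #|A i|)%N)
  (u : {dffun forall i : 'I_n, A i} -> 'rV[R]_n) :
  let V := conv (payoffs u) in
  V <> Fstar u <->
  exists uu ut : 'rV[R]_n,
    [/\ V uu, V ut, uu <> ut,
     (exists l : 'rV[R]_n, l != 0 /\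
        forall ub : 'rV[R]_n, argmax_lin V l ub <-> segment uu ut ub)
   & exists i j : 'I_n, i != j /\ uu ord0 i != ut ord0 i /\ uu ord0 j != ut ord0 j].
Proof.
move=> V.
have [a0 _] : exists a : {dffun forall i : 'I_n, A i}, True.
  have h : forall i, exists x : A i, True.
    by move=> i; have /card_gt0P [x _] := hA i; exists x.
  have [f _] := fin_all_exists h. by exists (finfun f).
split.
  move=> VF.
  case: (boolp.pselect (exists (l : 'rV[R]_n) (k : 'I_n) (a b : {dffun forall i : 'I_n, A i}), [/\ l 0 k != 0, a \in fs u l,
      b \in fs u l & u a 0 k != u b 0 k])); last first.
    move=> none; exfalso; apply: VF.
    have H : forall (l : 'rV[R]_n) (j : 'I_n) a b, l 0 j != 0 -> a \in fs u l ->
        b \in fs u l -> u a 0 j = u b 0 j.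
      move=> l j a b lj af bf; apply/eqP/negPn/negP => ne; apply: none.
      by exists l, j, a, b; split.
    apply: boolp.funext => x; apply: boolp.propext; split.
      exact: V_sub_F.
    exact: (box_in (corner_in a0 H)).
  move=> [l0 [k [a [b [lk af bf ab]]]]].
  have td : twodiff u k (fs u l0) by exists a, b; split.
  have [S' [p [q [[l' Sl'] sub [pS qS] pq seg]]]] :=
    step2 a0 (leqnn #|fs u l0|) (ex_intro _ l0 erefl) td.
  have pf0 : p \in fs u l0 by apply: (subsetP sub).
  have qf0 : q \in fs u l0 by apply: (subsetP sub).
  exists (u p), (u q); split.
  - exact: conv_pt.
  - exact: conv_pt.
  - by move=> e; move: pq; rewrite e eqxx.
  - case: (eqVneq l' 0) => [l'0 | l'0].
      exists l0; split; first by apply/eqP => e; move: lk; rewrite e mxE eqxx.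
      have E : fs u l0 = S'.
        apply/setP => x; apply/idP/idP => hx; last exact: (subsetP sub).
        rewrite Sl' l'0; apply/fsP => y; rewrite !dotp0l lexx //.
      by apply: argmax_seg; rewrite E.
    by exists l'; split => //; apply: argmax_seg; rewrite -Sl'.
  have dpq : dotp l0 (u p) = dotp l0 (u q).
    apply/eqP; rewrite eq_le; apply/andP; split.
      by move/fsP: qf0; apply.
    by move/fsP: pf0; apply.
  case: (boolp.pselect (exists j, j != k /\ u p 0 j != u q 0 j)).
    by move=> [j [jk hj]]; exists k, j; split; [rewrite eq_sym|split].
  move=> nj; exfalso.
  have : dotp l0 (u p) - dotp l0 (u q) = l0 0 k * (u p 0 k - u q 0 k).
    rewrite /dotp -sumrB (bigD1 k) //= big1 ?addr0; first by rewrite mulrBr.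
    move=> j jk; case: (eqVneq (u p 0 j) (u q 0 j)) => [->|ne]; first by rewrite subrr.
    by case: nj; exists j.
  rewrite dpq subrr => /esym /eqP; rewrite mulf_eq0 subr_eq0 (negbTE lk) /=.
  by rewrite (negbTE pq).
move=> [uu [ut [Vu Vt ne [l [l0 Hl]] [i [j [ij [ui uj]]]]]]] VF.
have amu : argmax_lin V l uu.
  by apply/Hl; exists 1; rewrite ler01 lexx scale1r subrr scale0r addr0.
have amt : argmax_lin V l ut.
  by apply/Hl; exists 0; rewrite ler01 lexx scale0r subr0 scale1r add0r.
have uuF : Fstar u uu by rewrite -VF.
have utF : Fstar u ut by rewrite -VF.
pose z := uu + (ut 0 i - uu 0 i) *: delta_mx (0:'I_1) i.
pose z' := ut + (uu 0 i - ut 0 i) *: delta_mx (0:'I_1) i.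
have zE m : z 0 m = if m == i then ut 0 i else uu 0 m.
  rewrite !mxE eqxx /=; case: (eqVneq m i) => [->|nmi]; first by rewrite ?eqxx mulr1 addrC subrK.
  by rewrite [X in _ * X]/= mulr0 addr0.
have z'E m : z' 0 m = if m == i then uu 0 i else ut 0 m.
  rewrite !mxE eqxx /=; case: (eqVneq m i) => [->|nmi]; first by rewrite ?eqxx mulr1 addrC subrK.
  by rewrite [X in _ * X]/= mulr0 addr0.
have zV : V z.
  rewrite VF => m; rewrite zE; case: ifP => [/eqP ->|_]; [exact: utF|exact: uuF].
have z'V : V z'.
  rewrite VF => m; rewrite z'E; case: ifP => [/eqP ->|_]; [exact: uuF|exact: utF].
have d1 := amu.2 _ zV.
have d2 := amt.2 _ z'V.
have e12 : dotp l uu = dotp l ut.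
  by apply/eqP; rewrite eq_le amu.2 ?amt.2.
move: d1 d2; rewrite /z /z' !dotpDr !dotpZr !dotp_deltar -e12 => d1 d2.
have zmax : argmax_lin V l z.
  split => // y Vy; rewrite /z dotpDr dotpZr dotp_deltar.
  have : (ut 0 i - uu 0 i) * l 0 i = 0.
    apply/eqP; rewrite eq_le; apply/andP; split; first by lra.
    have : (uu 0 i - ut 0 i) * l 0 i = - ((ut 0 i - uu 0 i) * l 0 i) by ring.
    lra.
  move=> ->; rewrite addr0; exact: amu.2.
have [t [t01 zt]] := (Hl z).1 zmax.
have := congr1 (fun M : 'rV[R]_n => M 0 i) zt.
rewrite /= zE eqxx !mxE => hi.
have t0 : t = 0.
  have : t * (uu 0 i - ut 0 i) = 0 by move: hi; lra.
  by move/eqP; rewrite mulf_eq0 subr_eq0 (negbTE ui) orbF => /eqP.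
have := congr1 (fun M : 'rV[R]_n => M 0 j) zt.
rewrite /= zE eq_sym (negbTE ij) !mxE t0 mul0r add0r subr0 mul1r => e.
by move: uj; rewrite e eqxx.
Qed.
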